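(* Let $(X,d)$ be a uniformly convex geodesic metric space. Then every closed convex pair $(A,B)$ of subsets of $X$ has proximal normal structure.
   Context: A geodesic space is one in which any two points are joined by a geodesic segment; a subset is convex if it contains every geodesic segment joining two of its points. A point $m$ is a midpoint of $x,y$ if $d(x,m)=d(m,y)=d(x,y)/2$. $X$ is uniformly convex if for every $r>0$ and $\varepsilon\in(0,2]$ there is $\delta\in(0,1]$ such that for all $a,x,y\in X$ with $d(x,a)\le r$, $d(y,a)\le r$, $d(x,y)\ge\varepsilon r$, one has $d(m,a)\le(1-\delta)r$ for any midpoint $m$ of $x,y$. Notation: $\operatorname{dist}(A,B)=\inf\{d(x,y):x\in A,y\in B\}$, $\delta(x,A)=\sup\{d(x,y):y\in A\}$, $\delta(A,B)=\sup\{d(x,y):x\in A,y\in B\}$. A pair $(H_1,H_2)$ is proximal if for every $(a,b)\in H_1\times H_2$ there is $(a',b')\in H_1\times H_2$ with $d(a,b')=d(a',b)=\operatorname{dist}(H_1,H_2)$. A convex pair $(K_1,K_2)$ has proximal normal structure if for every closed bounded convex proximal pair $(H_1,H_2)$ with $H_1\subseteq K_1$, $H_2\subseteq K_2$, $\operatorname{dist}(H_1,H_2)=\operatorname{dist}(K_1,K_2)$ and $\delta(H_1,H_2)>\operatorname{dist}(H_1,H_2)$, there exists $(x_1,x_2)\in H_1\times H_2$ with $\delta(x_1,H_2)<\delta(H_1,H_2)$ and $\delta(x_2,H_1)<\delta(H_1,H_2)$. *)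

(* Defs.v *)
From Stdlib Require Import Reals.
From Coquelicot Require Import Coquelicot.
Open Scope R_scope.

Section MetricDefs.
Context {X : Type} (d : X -> X -> R).

Definition is_metric : Prop :=
  (forall x y, 0 <= d x y) /\
  (forall x y, d x y = 0 <-> x = y) /\
  (forall x y, d x y = d y x) /\
  (forall x y z, d x z <= d x y + d y z).

Definition geodesic (c : R -> X) (x y : X) : Prop :=
  c 0 = x /\ c (d x y) = y /\
  forall s t, 0 <= s <= d x y -> 0 <= t <= d x y -> d (c s) (c t) = Rabs (s - t).

Definition geodesic_space : Prop :=
  forall x y, exists c, geodesic c x y.

Definition mconvex (A : X -> Prop) : Prop :=
  forall x y c, A x -> A y -> geodesic c x y ->
    forall t, 0 <= t <= d x y -> A (c t).

Definition midpoint (x y m : X) : Prop :=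
  d x m = d x y / 2 /\ d m y = d x y / 2.

Definition uniformly_convex : Prop :=
  forall r eps, 0 < r -> 0 < eps <= 2 ->
    exists delta, 0 < delta <= 1 /\
      forall a x y m, d x a <= r -> d y a <= r -> eps * r <= d x y ->
        midpoint x y m -> d m a <= (1 - delta) * r.

Definition mclosed (A : X -> Prop) : Prop :=
  forall x, (forall e, 0 < e -> exists a, A a /\ d x a < e) -> A x.

Definition mbounded (A : X -> Prop) : Prop :=
  exists x0 r, forall a, A a -> d x0 a <= r.

Definition dist_set (A B : X -> Prop) : Rbar :=
  Glb_Rbar (fun r => exists x y, A x /\ B y /\ r = d x y).

Definition diam_pt (x : X) (A : X -> Prop) : Rbar :=
  Lub_Rbar (fun r => exists y, A y /\ r = d x y).

Definition diam_set (A B : X -> Prop) : Rbar :=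
  Lub_Rbar (fun r => exists x y, A x /\ B y /\ r = d x y).

Definition proximal_pair (H1 H2 : X -> Prop) : Prop :=
  forall a b, H1 a -> H2 b ->
    exists a' b', H1 a' /\ H2 b' /\
      Finite (d a b') = dist_set H1 H2 /\ Finite (d a' b) = dist_set H1 H2.

Definition proximal_normal_structure (K1 K2 : X -> Prop) : Prop :=
  forall H1 H2 : X -> Prop,
    mclosed H1 -> mclosed H2 -> mbounded H1 -> mbounded H2 ->
    mconvex H1 -> mconvex H2 -> proximal_pair H1 H2 ->
    (forall x, H1 x -> K1 x) -> (forall x, H2 x -> K2 x) ->
    dist_set H1 H2 = dist_set K1 K2 ->
    Rbar_lt (dist_set H1 H2) (diam_set H1 H2) ->
    exists x1 x2, H1 x1 /\ H2 x2 /\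
      Rbar_lt (diam_pt x1 H2) (diam_set H1 H2) /\
      Rbar_lt (diam_pt x2 H1) (diam_set H1 H2).

End MetricDefs.

(* Main.v *)
Require Import Defs.
From Stdlib Require Import Reals Lra Classical.
From Coquelicot Require Import Coquelicot.
Open Scope R_scope.

Lemma lub_le_aux (E : R -> Prop) (M : R) :
  (forall r, E r -> r <= M) -> Rbar_le (Lub_Rbar E) (Finite M).
Proof.
  intros H. destruct (Lub_Rbar_correct E) as [_ Hl]. apply Hl.
  intros r Hr. simpl. now apply H.
Qed.

Lemma lub_ge_aux (E : R -> Prop) (r : R) :
  E r -> Rbar_le (Finite r) (Lub_Rbar E).
Proof.
  intros H. destruct (Lub_Rbar_correct E) as [Hu _]. now apply Hu.
Qed.

Lemma key_aux (X : Type) (d : X -> X -> R)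
  (Hmet : is_metric d) (Hgeo : geodesic_space d) (Huc : uniformly_convex d)
  (H K : X -> Prop) (dl : R) (k0 x x' : X) :
  mconvex d H -> (forall a b, H a -> K b -> d a b <= dl) -> K k0 ->
  H x -> H x' -> x <> x' ->
  exists m, H m /\ Rbar_lt (diam_pt d m K) (Finite dl).
Proof.
  destruct Hmet as [Hpos [Hzero [Hsym Htri]]].
  intros Hcv Hb Hk0 Hx Hx' Hne.
  set (D := d x x').
  assert (HD0 : 0 < D).
  { destruct (Rle_lt_or_eq_dec 0 D (Hpos x x')) as [h|h]; [exact h|].
    exfalso; apply Hne; apply Hzero; unfold D; auto. }
  assert (HD2 : D <= 2 * dl).
  { pose proof (Htri x k0 x'). rewrite (Hsym k0 x') in H0.
    pose proof (Hb x k0 Hx Hk0). pose proof (Hb x' k0 Hx' Hk0). unfold D; lra. }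
  assert (Hdl : 0 < dl) by lra.
  set (eps := D / dl).
  assert (Heps : eps * dl = D) by (unfold eps; field; lra).
  assert (Hepsb : 0 < eps <= 2) by (split; nra).
  destruct (Huc dl eps Hdl Hepsb) as [del [Hdel Hdel2]].
  destruct (Hgeo x x') as [c [Hc0 [Hc1 Hciso]]].
  fold D in Hc1, Hciso.
  set (m := c (D / 2)).
  assert (Hm : H m).
  { unfold m. apply (Hcv x x' c Hx Hx' (conj Hc0 (conj Hc1 Hciso))). fold D; lra. }
  assert (Hmid : midpoint d x x' m).
  { unfold midpoint. fold D. split.
    - unfold m. rewrite <- Hc0 at 1. rewrite Hciso by lra.
      rewrite Rabs_left; lra.
    - unfold m. rewrite <- Hc1 at 1. rewrite Hciso by lra.
      rewrite Rabs_left; lra. }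
  exists m. split; [exact Hm|].
  apply Rbar_le_lt_trans with (Finite ((1 - del) * dl)).
  - unfold diam_pt. apply lub_le_aux. intros r [y [Hy ->]].
    apply (Hdel2 y x x' m); auto. fold D; lra.
  - simpl. nra.
Qed.

Theorem mainTheorem4 (X : Type) (d : X -> X -> R)
  (Hmet : is_metric d) (Hgeo : geodesic_space d) (Huc : uniformly_convex d)
  (A B : X -> Prop) :
  mclosed d A -> mclosed d B -> mconvex d A -> mconvex d B ->
  proximal_normal_structure d A B.
Proof.
  intros _ _ _ _.
  pose proof Hmet as [Hpos [Hzero [Hsym Htri]]].
  intros H1 H2 _ _ Hb1 Hb2 Hc1 Hc2 Hprox _ _ _ Hlt.
  destruct (classic (exists a b, H1 a /\ H2 b)) as [[a0 [b0 [Ha0 Hb0]]]|Hno].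
  2:{ exfalso.
      assert (Hl : Rbar_le (diam_set d H1 H2) m_infty).
      { destruct (Lub_Rbar_correct (fun r => exists x y, H1 x /\ H2 y /\ r = d x y)) as [_ Hl].
        apply Hl. intros r [x [y [hx [hy _]]]]. exfalso; apply Hno; eauto. }
      pose proof (Rbar_lt_le_trans _ _ _ Hlt Hl).
      destruct (dist_set d H1 H2); simpl in H; auto. }
  destruct Hb1 as [x0 [r1 Hr1]]. destruct Hb2 as [y0 [r2 Hr2]].
  assert (HM : Rbar_le (diam_set d H1 H2) (Finite (r1 + d x0 y0 + r2))).
  { apply lub_le_aux. intros r [x [y [hx [hy ->]]]].
    pose proof (Htri x x0 y). pose proof (Htri x0 y0 y).
    pose proof (Hr1 x hx). pose proof (Hr2 y hy). rewrite (Hsym x x0) in H. lra. }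
  assert (Hm0 : Rbar_le (Finite (d a0 b0)) (diam_set d H1 H2)).
  { apply lub_ge_aux. exists a0, b0. auto. }
  assert (Hub : forall x y, H1 x -> H2 y -> Rbar_le (Finite (d x y)) (diam_set d H1 H2)).
  { intros x y hx hy. apply lub_ge_aux. exists x, y. auto. }
  destruct (classic (exists x x', H1 x /\ H1 x' /\ x <> x')) as [[x [x' [hx [hx' hne]]]]|Hs1].
  2:{ exfalso. apply (Rbar_lt_not_le _ _ Hlt).
      destruct (Lub_Rbar_correct (fun r => exists x y, H1 x /\ H2 y /\ r = d x y)) as [_ Hl].
      apply Hl. intros r [x [y [hx [hy ->]]]].
      destruct (Hprox x y hx hy) as [a' [b' [ha' [hb' [_ E2]]]]].
      assert (a' = x) as ->.
      { apply NNPP. intro hn. apply Hs1. exists a', x. auto. }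
      rewrite <- E2. apply Rbar_le_refl. }
  destruct (classic (exists y y', H2 y /\ H2 y' /\ y <> y')) as [[y [y' [hy [hy' hne']]]]|Hs2].
  2:{ exfalso. apply (Rbar_lt_not_le _ _ Hlt).
      destruct (Lub_Rbar_correct (fun r => exists x y, H1 x /\ H2 y /\ r = d x y)) as [_ Hl].
      apply Hl. intros r [u [v [hu [hv ->]]]].
      destruct (Hprox u v hu hv) as [a' [b' [ha' [hb' [E1 _]]]]].
      assert (b' = v) as ->.
      { apply NNPP. intro hn. apply Hs2. exists b', v. auto. }
      rewrite <- E1. apply Rbar_le_refl. }
  destruct (diam_set d H1 H2) as [dl| |] eqn:Edl; simpl in HM, Hm0; try contradiction.
  assert (Hb : forall a b, H1 a -> H2 b -> d a b <= dl).
  { intros a b ha hb. exact (Hub a b ha hb). }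
  assert (Hb' : forall a b, H2 a -> H1 b -> d a b <= dl).
  { intros a b ha hb. rewrite Hsym. auto. }
  destruct (key_aux X d Hmet Hgeo Huc H1 H2 dl b0 x x' Hc1 Hb Hb0 hx hx' hne) as [m1 [hm1 L1]].
  destruct (key_aux X d Hmet Hgeo Huc H2 H1 dl a0 y y' Hc2 Hb' Ha0 hy hy' hne') as [m2 [hm2 L2]].
  exists m1, m2. auto.
Qed.
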